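(* Let $p\ge 2$, $d\in\{0,\dots,9\}$ and $i\in\{10^{p-2},\dots,10^{p-1}-1\}$ be integers. The sequence $\big(P_{(d,(10i+d+1)10^{n-p+1}-1,p)}\big)_{n\ge p}$ converges, as $n\to\infty$, to $$\frac{\alpha_{(d,p)}10^{p-1}+i+1-10^{p-2}-d\,k_{(d,p,i)}-9l_{(d,p,i)}+m_{(d,p,i)}+n_{(d,p,i)}+10^{p-2}\ln\big(\frac{10^{p-1}+d}{10^{p-1}}\big)}{10i+d+1},$$ where $k_{(d,p,i)}=\sum_{j=10^{p-2}}^{i}\ln\frac{10j+d+1}{10j+d}$, $l_{(d,p,i)}=\sum_{j=10^{p-2}}^{i}j\ln\frac{10j+d+1}{10j+d}$, $m_{(d,p,i)}=\sum_{j=10^{p-2}}^{i-1}\ln\frac{10(j+1)+d}{10j+d+1}$, $n_{(d,p,i)}=\sum_{j=10^{p-2}}^{i-1}j\ln\frac{10(j+1)+d}{10j+d+1}$, and $$\alpha_{(d,p)}=\frac{1}{10}+\frac{n_{(d,p)}+m_{(d,p)}-9l_{(d,p)}-d\,k_{(d,p)}}{9\times10^{p-1}}+\frac{1}{90}\ln\Big(\frac{10^{p-1}+d}{10^{p-1}}\Big)+\frac{1}{9}\ln\Big(\frac{10^{p}}{10^{p}-10+d+1}\Big)$$ with $k_{(d,p)}=k_{(d,p,10^{p-1}-1)}$, $l_{(d,p)}=l_{(d,p,10^{p-1}-1)}$, $m_{(d,p)}=\sum_{j=10^{p-2}}^{10^{p-1}-2}\ln\frac{10(j+1)+d}{10j+d+1}$,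 $n_{(d,p)}=\sum_{j=10^{p-2}}^{10^{p-1}-2}j\ln\frac{10(j+1)+d}{10j+d+1}$.
   Context: For an integer $x\ge 10^{p-1}$, the ''$p$-th digit of $x$'' is the $p$-th digit of its decimal expansion counted from the left. For $d\in\{0,\dots,9\}$ and $m\ge 10^{p-1}$, let $N_d(m)$ be the number of integers $x$ with $10^{p-1}\le x\le m$ whose $p$-th digit is $d$. For $N\ge 10^{p-1}$, $$P_{(d,N,p)}=\frac{1}{N+1-10^{p-1}}\sum_{m=10^{p-1}}^{N}\frac{N_d(m)}{m+1-10^{p-1}},$$ the probability that the $p$-th digit of $x$ is $d$ when $m$ is chosen uniformly in $\{10^{p-1},\dots,N\}$ and then $x$ uniformly in $\{10^{p-1},\dots,m\}$. The number $\alpha_{(d,p)}$ is the limit of $P_{(d,10^n-1,p)}$ as $n\to\infty$. Here $\ln$ is the natural logarithm and empty sums are zero. *)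

(* Defs.v *)
From Stdlib Require Import Reals Lra Lia Arith List.
From Coquelicot Require Import Coquelicot.
Open Scope R_scope.

(* number of decimal digits of x (x >= 1); fuel = x suffices *)
Fixpoint ndigits_aux (fuel x : nat) : nat :=
  match fuel with
  | O => O
  | S f => if Nat.ltb x 10 then 1%nat else S (ndigits_aux f (x / 10))
  end.
Definition ndigits (x : nat) : nat := ndigits_aux x x.

(* p-th decimal digit of x counted from the left (meaningful for x >= 10^(p-1)) *)
Definition digit (p x : nat) : nat :=
  ((x / 10 ^ (ndigits x - p)) mod 10)%nat.

Definition Ncount (d p m : nat) : nat :=
  length (filter (fun x => Nat.eqb (digit p x) d)
                 (seq (10 ^ (p - 1)) (m + 1 - 10 ^ (p - 1)))).

(* real sum of f j over lo <= j < hi (empty if hi <= lo) *)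
Definition rsum (lo hi : nat) (f : nat -> R) : R :=
  fold_right Rplus 0 (map f (seq lo (hi - lo))).

Definition Pdig (d N p : nat) : R :=
  / INR (N + 1 - 10 ^ (p - 1)) *
  rsum (10 ^ (p - 1)) (N + 1)
       (fun m => INR (Ncount d p m) / INR (m + 1 - 10 ^ (p - 1))).

Definition kdpi (d p i : nat) : R :=
  rsum (10 ^ (p - 2)) (i + 1)
       (fun j => ln (INR (10 * j + d + 1) / INR (10 * j + d))).
Definition ldpi (d p i : nat) : R :=
  rsum (10 ^ (p - 2)) (i + 1)
       (fun j => INR j * ln (INR (10 * j + d + 1) / INR (10 * j + d))).
(* sums over 10^(p-2) <= j <= i-1 *)
Definition mdpi (d p i : nat) : R :=
  rsum (10 ^ (p - 2)) i
       (fun j => ln (INR (10 * (j + 1) + d) / INR (10 * j + d + 1))).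
Definition ndpi (d p i : nat) : R :=
  rsum (10 ^ (p - 2)) i
       (fun j => INR j * ln (INR (10 * (j + 1) + d) / INR (10 * j + d + 1))).

Definition kdp (d p : nat) : R := kdpi d p (10 ^ (p - 1) - 1).
Definition ldp (d p : nat) : R := ldpi d p (10 ^ (p - 1) - 1).
(* sums over 10^(p-2) <= j <= 10^(p-1)-2 *)
Definition mdp (d p : nat) : R := mdpi d p (10 ^ (p - 1) - 1).
Definition ndp (d p : nat) : R := ndpi d p (10 ^ (p - 1) - 1).

Definition alpha_formula (d p : nat) : R :=
  1 / 10
  + (ndp d p + mdp d p - 9 * ldp d p - INR d * kdp d p) / (9 * 10 ^ (p - 1))
  + 1 / 90 * ln (INR (10 ^ (p - 1) + d) / INR (10 ^ (p - 1)))
  + 1 / 9 * ln (INR (10 ^ p) / INR (10 ^ p - 10 + d + 1)).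

Definition prop5_limit (d p i : nat) : R :=
  (alpha_formula d p * 10 ^ (p - 1) + INR i + 1 - 10 ^ (p - 2)
   - INR d * kdpi d p i - 9 * ldpi d p i + mdpi d p i + ndpi d p i
   + 10 ^ (p - 2) * ln (INR (10 ^ (p - 1) + d) / INR (10 ^ (p - 1))))
  / INR (10 * i + d + 1).

(* Main.v *)
Require Import Defs.
From Stdlib Require Import Reals Arith Lra Lia List ZArith.
From Coquelicot Require Import Coquelicot.
Open Scope R_scope.


Ltac dlia := zify; rewrite ?Nat2Z.inj_div, ?Nat2Z.inj_mod in *; zify; Z.div_mod_to_equations; lia.

Lemma nd_S : forall f x, ndigits_aux (S f) x =
  if Nat.ltb x 10 then 1%nat else S (ndigits_aux f (x / 10)).
Proof. reflexivity. Qed.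

Lemma nd_aux : forall j fuel x, (10^j <= x < 10^(S j))%nat -> (j < fuel)%nat ->
  ndigits_aux fuel x = S j.
Proof.
  induction j; intros fuel x Hx Hf; destruct fuel as [|f]; try lia; rewrite nd_S.
  - simpl in Hx. replace (Nat.ltb x 10) with true; [reflexivity|].
    symmetry; apply Nat.ltb_lt; lia.
  - replace (Nat.ltb x 10) with false.
    + f_equal. apply IHj; [|lia]. split.
      * apply Nat.div_le_lower_bound; [lia|]. simpl in Hx. lia.
      * apply Nat.div_lt_upper_bound; [lia|]. simpl in Hx |- *. lia.
    + symmetry; apply Nat.ltb_ge. simpl in Hx.
      pose proof (Nat.pow_le_mono_r 10 0 j). simpl in H. lia.
Qed.

Lemma ndigits_val : forall j x, (10^j <= x < 10^(S j))%nat -> ndigits x = S j.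
Proof.
  intros. unfold ndigits. apply nd_aux; auto.
  pose proof (Nat.pow_gt_lin_r 10 j). lia.
Qed.

Lemma div_val : forall x k y, (0 < k)%nat -> (y*k <= x < (y+1)*k)%nat -> (x / k = y)%nat.
Proof.
  intros. symmetry. apply (Nat.div_unique x k y (x - y*k)); lia.
Qed.

Lemma digit_val : forall p k y r, (1 <= p)%nat ->
  (10^(p-1) <= y < 10 * 10^(p-1))%nat -> (r < 10^k)%nat ->
  digit p (y * 10^k + r) = (y mod 10)%nat.
Proof.
  intros p k y r Hp Hy Hr. unfold digit.
  assert (Hk : (0 < 10^k)%nat) by (apply Nat.neq_0_lt_0, Nat.pow_nonzero; lia).
  rewrite (ndigits_val (p - 1 + k)).
  - replace (S (p - 1 + k) - p)%nat with k by lia.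
    rewrite (div_val _ _ y); auto. lia.
  - rewrite Nat.pow_succ_r', !Nat.pow_add_r.
    replace (10 ^ (p-1) * 10^k)%nat with (10^(p-1) * 10^k)%nat by lia.
    assert (10 * 10^(p-1) = 10^p)%nat.
    { rewrite <- Nat.pow_succ_r'. f_equal. lia. }
    split; [nia|]. nia.
Qed.

Lemma Ncount_S : forall d p m, (1 <= p)%nat -> (10^(p-1) <= S m)%nat ->
  Ncount d p (S m) = (Ncount d p m + (if Nat.eqb (digit p (S m)) d then 1 else 0))%nat.
Proof.
  intros d p m Hp Hm. unfold Ncount.
  replace (S m + 1 - 10^(p-1))%nat with (S (m + 1 - 10^(p-1))) by lia.
  rewrite seq_S, filter_app, length_app.
  replace (10 ^ (p - 1) + (m + 1 - 10 ^ (p - 1)))%nat with (S m) by lia.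
  simpl. destruct (Nat.eqb (digit p (S m)) d); simpl; lia.
Qed.

Lemma Ncount_start : forall d p, (1 <= p)%nat -> Ncount d p (10^(p-1) - 1) = 0%nat.
Proof.
  intros. unfold Ncount.
  assert (0 < 10^(p-1))%nat by (apply Nat.neq_0_lt_0, Nat.pow_nonzero; lia).
  replace (10 ^ (p - 1) - 1 + 1 - 10 ^ (p - 1))%nat with 0%nat by lia. reflexivity.
Qed.

Definition Cy (d y : nat) : nat := ((y + 9 - d) / 10)%nat.
Definition be (d y : nat) : nat := if Nat.eqb (y mod 10) d then 1%nat else 0%nat.

Lemma Cy_S : forall d y, (d <= 9)%nat -> Cy d (S y) = (Cy d y + be d y)%nat.
Proof.
  intros. unfold Cy, be. replace (S y + 9 - d)%nat with (y + 10 - d)%nat by lia.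
  destruct (Nat.eqb_spec (y mod 10) d); dlia.
Qed.

Lemma Cy_val : forall d y j, (d <= 9)%nat -> (10 * j <= y + 9 - d < 10 * j + 10)%nat ->
  Cy d y = j.
Proof. intros. unfold Cy. dlia. Qed.

Lemma pow_pos10 : forall k, (0 < 10^k)%nat.
Proof. intros. apply Nat.neq_0_lt_0, Nat.pow_nonzero; lia. Qed.

Lemma L_eq : forall p, (2 <= p)%nat -> (10^(p-1) = 10 * 10^(p-2))%nat.
Proof. intros. rewrite <- Nat.pow_succ_r'. f_equal. lia. Qed.

Lemma Lp_eq : forall p, (1 <= p)%nat -> (10^p = 10 * 10^(p-1))%nat.
Proof. intros. rewrite <- Nat.pow_succ_r'. f_equal. lia. Qed.

Section Block.
Variables (p d : nat).
Hypothesis (hp : (2 <= p)%nat) (hd : (d <= 9)%nat).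

Lemma Hrec_lem : forall k y, (10^(p-1) <= y < 10 * 10^(p-1))%nat ->
    (Ncount d p (y * 10^k - 1) + 10^(p-2) = 10^k * Cy d y)%nat ->
    forall r, (r < 10^k)%nat -> 
    (Ncount d p (y * 10^k + r) + 10^(p-2) = 10^k * Cy d y + be d y * (r + 1))%nat.
Proof.
  intros k y Hy H0.
  pose proof (pow_pos10 k) as Hk.
  assert (Hyk : (y <= y * 10^k)%nat).
  { rewrite <- (Nat.mul_1_r y) at 1. apply Nat.mul_le_mono_l. lia. }
  induction r; intros Hr.
  - replace (y * 10^k + 0)%nat with (S (y * 10^k - 1)) by lia.
    rewrite Ncount_S by lia.
    replace (S (y * 10 ^ k - 1)) with (y * 10^k + 0)%nat by lia.
    rewrite digit_val by lia.
    unfold be. destruct (Nat.eqb (y mod 10) d); lia.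
  - replace (y * 10^k + S r)%nat with (S (y * 10^k + r)) by lia.
    rewrite Ncount_S by lia.
    replace (S (y * 10 ^ k + r)) with (y * 10^k + S r)%nat by lia.
    rewrite digit_val by lia.
    specialize (IHr ltac:(lia)).
    unfold be in *. destruct (Nat.eqb (y mod 10) d); lia.
Qed.

Lemma block_from_start : forall k,
  (Ncount d p (10^(p-1) * 10^k - 1) + 10^(p-2) = 10^(p-2) * 10^k)%nat ->
  forall n, (10^(p-1) + n < 10 * 10^(p-1))%nat ->
  (Ncount d p ((10^(p-1) + n) * 10^k - 1) + 10^(p-2) = 10^k * Cy d (10^(p-1) + n))%nat.
Proof.
  intros k Hst.
  pose proof (L_eq p hp) as HL. pose proof (pow_pos10 k) as Hk.
  pose proof (pow_pos10 (p-2)) as Ha.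
  induction n; intros Hn.
  - rewrite Nat.add_0_r, Hst.
    rewrite (Cy_val d _ (10^(p-2))) by lia. lia.
  - specialize (IHn ltac:(lia)).
    pose proof (Hrec_lem k (10^(p-1) + n) ltac:(lia) IHn (10^k - 1) ltac:(lia)) as H1.
    replace ((10 ^ (p - 1) + S n) * 10 ^ k - 1)%nat with
        ((10 ^ (p - 1) + n) * 10 ^ k + (10^k - 1))%nat by
      (rewrite Nat.mul_add_distr_r, Nat.mul_add_distr_r; simpl; lia).
    rewrite H1. replace (10^(p-1) + S n)%nat with (S (10^(p-1)+n)) by lia.
    rewrite Cy_S by lia.
    replace (10 ^ k - 1 + 1)%nat with (10^k)%nat by lia.
    rewrite Nat.mul_add_distr_l. lia.
Qed.

Lemma start_all : forall k,
  (Ncount d p (10^(p-1) * 10^k - 1) + 10^(p-2) = 10^(p-2) * 10^k)%nat.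
Proof.
  pose proof (L_eq p hp) as HL. pose proof (pow_pos10 (p-2)).
  induction k.
  - rewrite Nat.pow_0_r, !Nat.mul_1_r, Ncount_start by lia. lia.
  - pose proof (pow_pos10 k).
    pose proof (block_from_start k IHk (9 * 10^(p-1) - 1) ltac:(lia)) as H00.
    replace (10 ^ (p - 1) + (9 * 10 ^ (p - 1) - 1))%nat with (10 * 10^(p-1) - 1)%nat in H00 by lia.
    pose proof (Hrec_lem k (10 * 10^(p-1) - 1) ltac:(lia) H00 (10^k - 1) ltac:(lia)) as HH.
    assert (E : (10 ^ (p - 1) * 10 ^ S k - 1 = (10 * 10 ^ (p - 1) - 1) * 10 ^ k + (10 ^ k - 1))%nat).
    { rewrite Nat.pow_succ_r', Nat.mul_sub_distr_r. 
      assert (10 ^ k <= 10 * 10 ^ (p - 1) * 10 ^ k)%nat by nia. lia. }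
    rewrite E, HH.
    assert (Cy d (10 * 10^(p-1) - 1) + be d (10 * 10^(p-1) - 1) = 10^(p-1))%nat.
    { rewrite <- Cy_S by lia. apply Cy_val; lia. }
    replace (10 ^ k - 1 + 1)%nat with (10^k)%nat by lia.
    rewrite Nat.pow_succ_r'. rewrite HL in *. nia.
Qed.

Lemma Ncount_block : forall k y r, (10^(p-1) <= y < 10 * 10^(p-1))%nat -> (r < 10^k)%nat ->
  (Ncount d p (y * 10^k + r) + 10^(p-2) = 10^k * Cy d y + be d y * (r + 1))%nat.
Proof.
  intros k y r Hy Hr. apply Hrec_lem; auto.
  replace y with (10^(p-1) + (y - 10^(p-1)))%nat by lia.
  apply block_from_start; [apply start_all | lia].
Qed.

End Block.


Lemma fold_plus_acc : forall l x, fold_right Rplus x l = fold_right Rplus 0 l + x.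
Proof. induction l; intros; simpl; [lra| rewrite IHl; lra]. Qed.

Lemma rsum_nil : forall lo hi f, (hi <= lo)%nat -> rsum lo hi f = 0.
Proof. intros. unfold rsum. replace (hi - lo)%nat with 0%nat by lia. reflexivity. Qed.

Lemma rsum_S : forall lo hi f, (lo <= hi)%nat -> rsum lo (S hi) f = rsum lo hi f + f hi.
Proof.
  intros. unfold rsum. replace (S hi - lo)%nat with (S (hi - lo)) by lia.
  rewrite seq_S, map_app, fold_right_app. simpl.
  replace (lo + (hi - lo))%nat with hi by lia.
  rewrite fold_plus_acc. lra.
Qed.

Lemma rsum_ext : forall lo hi f g, (forall j, (lo <= j < hi)%nat -> f j = g j) ->
  rsum lo hi f = rsum lo hi g.
Proof.
  intros lo hi f g H. induction hi.
  - rewrite !rsum_nil by lia; auto.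
  - destruct (Nat.le_gt_cases lo hi).
    + rewrite !rsum_S by lia. rewrite IHhi by (intros; apply H; lia). rewrite H by lia. auto.
    + rewrite !rsum_nil by lia; auto.
Qed.

Lemma rsum_split : forall lo mid hi f, (lo <= mid <= hi)%nat ->
  rsum lo hi f = rsum lo mid f + rsum mid hi f.
Proof.
  intros lo mid hi f H. induction hi.
  - rewrite !rsum_nil by lia; lra.
  - destruct (Nat.eq_dec mid (S hi)).
    + subst. rewrite (rsum_nil (S hi) (S hi)) by lia. lra.
    + rewrite !rsum_S by lia. rewrite IHhi by lia. lra.
Qed.

Lemma rsum_plus : forall lo hi f g, rsum lo hi (fun j => f j + g j) = rsum lo hi f + rsum lo hi g.
Proof.
  intros. induction hi.
  - rewrite !rsum_nil by lia; lra.
  - destruct (Nat.le_gt_cases lo hi).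
    + rewrite !rsum_S by lia. rewrite IHhi. lra.
    + rewrite !rsum_nil by lia; lra.
Qed.

Lemma rsum_scal : forall lo hi c f, rsum lo hi (fun j => c * f j) = c * rsum lo hi f.
Proof.
  intros. induction hi.
  - rewrite !rsum_nil by lia; lra.
  - destruct (Nat.le_gt_cases lo hi).
    + rewrite !rsum_S by lia. rewrite IHhi. lra.
    + rewrite !rsum_nil by lia; lra.
Qed.

Lemma rsum_const : forall lo hi c, rsum lo hi (fun _ => c) = INR (hi - lo) * c.
Proof.
  intros. induction hi.
  - rewrite !rsum_nil by lia. simpl; lra.
  - destruct (Nat.le_gt_cases lo hi).
    + rewrite !rsum_S by lia. rewrite IHhi. replace (S hi - lo)%nat with (S (hi - lo)) by lia.
      rewrite S_INR. lra.
    + rewrite !rsum_nil by lia. replace (S hi - lo)%nat with 0%nat by lia. simpl; lra.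
Qed.

Lemma rsum_shift : forall a n f, rsum a (a + n) f = rsum 0 n (fun r => f (a + r)%nat).
Proof.
  intros. induction n.
  - rewrite !rsum_nil by lia; lra.
  - rewrite Nat.add_succ_r, !rsum_S by lia. rewrite IHn. auto.
Qed.

Lemma rsum_blocks : forall a b P f, (a <= b)%nat ->
  rsum (a * P) (b * P) f = rsum a b (fun y => rsum (y * P) ((y + 1) * P) f).
Proof.
  intros a b P f H. induction b.
  - rewrite !rsum_nil by nia; lra.
  - destruct (Nat.eq_dec a (S b)).
    + subst. rewrite !rsum_nil by lia; lra.
    + rewrite rsum_S by lia. rewrite <- IHb by lia.
      rewrite (rsum_split (a * P) (b * P) (S b * P)) by nia.
      replace (b + 1)%nat with (S b) by lia. auto.
Qed.

Lemma rsum_decades : forall L K f, 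
  rsum L (L * 10^K) f = rsum 0 K (fun k => rsum (L * 10^k) (L * 10^(S k)) f).
Proof.
  intros. induction K.
  - rewrite Nat.pow_0_r, Nat.mul_1_r. rewrite !rsum_nil by lia; lra.
  - rewrite rsum_S by lia. rewrite <- IHK.
    apply rsum_split. split. 
    + pose proof (pow_pos10 K). nia.
    + rewrite Nat.pow_succ_r'. pose proof (pow_pos10 K). nia.
Qed.


Lemma ln_1px : forall x, -1 < x -> ln (1 + x) <= x.
Proof.
  intros. rewrite <- (ln_exp x) at 2. apply ln_le; [lra|]. apply exp_ineq1_le.
Qed.

Lemma lstep_low : forall t, 0 < t -> ln (t + 1) - ln t <= / t.
Proof.
  intros. rewrite <- ln_div by lra.
  replace ((t + 1) / t) with (1 + / t) by (field; lra).
  apply ln_1px. pose proof (Rinv_0_lt_compat t H). lra.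
Qed.

Lemma lstep_up : forall t, 1 < t -> / t <= ln t - ln (t - 1).
Proof.
  intros. rewrite <- ln_div by lra.
  assert (0 < / t < 1). { split. apply Rinv_0_lt_compat; lra. 
    rewrite <- Rinv_1. apply Rinv_lt_contravar; lra. }
  assert (ln (1 + - / t) <= - / t) by (apply ln_1px; lra).
  replace (t / (t - 1)) with (/ (1 + - / t)) by (field; split; lra).
  rewrite ln_Rinv by lra. lra.
Qed.

Definition Hs (A n : nat) : R := rsum 0 n (fun r => / INR (A + r + 1)).

Lemma Hs_bounds : forall A n, (1 <= A)%nat ->
  ln (INR (A + n + 1)) - ln (INR (A + 1)) <= Hs A n <= ln (INR (A + n)) - ln (INR A).
Proof.
  intros A n HA. unfold Hs. induction n.
  - rewrite rsum_nil by lia. rewrite Nat.add_0_r. lra.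
  - rewrite rsum_S by lia.
    replace (A + S n + 1)%nat with (A + n + 1 + 1)%nat by lia.
    replace (A + S n)%nat with (A + n + 1)%nat by lia.
    assert (H1 : 1 <= INR (A + n)) by (apply (le_INR 1); lia).
    rewrite !plus_INR in *. simpl INR in *.
    pose proof (lstep_low (INR A + INR n + 1) ltac:(lra)).
    pose proof (lstep_up (INR A + INR n + 1) ltac:(lra)).
    replace (INR A + INR n + 1 - 1) with (INR A + INR n) in * by lra.
    lra.
Qed.

Lemma continuity_ln : forall x, 0 < x -> continuity_pt ln x.
Proof.
  intros. apply derivable_continuous_pt. exists (/ x). apply derivable_pt_lim_ln; auto.
Qed.

Lemma geom10 : is_lim_seq (fun k => (/10)^k) 0.
Proof. apply is_lim_seq_geom. rewrite Rabs_pos_eq; lra. Qed.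

Lemma ratio_lim : forall al bb ga de, bb <> 0 ->
  is_lim_seq (fun k => (al + ga * (/10)^k) / (bb + de * (/10)^k)) (al / bb).
Proof.
  intros.
  replace (al / bb) with ((al + ga * 0) / (bb + de * 0)) by (f_equal; ring).
  apply is_lim_seq_div'.
  - apply is_lim_seq_plus'. apply is_lim_seq_const. apply is_lim_seq_mult'. apply is_lim_seq_const. apply geom10.
  - apply is_lim_seq_plus'. apply is_lim_seq_const. apply is_lim_seq_mult'. apply is_lim_seq_const. apply geom10.
  - replace (bb + de * 0) with bb by ring. auto.
Qed.

Lemma lnratio_lim : forall al bb ga de, 0 < al -> 0 < bb ->
  is_lim_seq (fun k => ln ((al + ga * (/10)^k) / (bb + de * (/10)^k))) (ln al - ln bb).
Proof.
  intros. rewrite <- ln_div by auto.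
  apply is_lim_seq_continuous. apply continuity_ln. apply Rdiv_lt_0_compat; auto.
  apply ratio_lim. lra.
Qed.

Lemma pow10_INR : forall k, INR (10^k) = 10^k.
Proof. intros. rewrite pow_INR. replace (INR 10) with 10; [reflexivity|simpl; lra]. Qed.

Lemma pow10_pos : forall k, 0 < 10^k.
Proof. intros. apply pow_lt. lra. Qed.

Lemma inv10pow : forall k, (/10)^k * 10^k = 1.
Proof. intros. rewrite pow_inv. field. apply pow_nonzero. lra. Qed.

Lemma scale10 : forall k a X, 10^k * (a + X * (/10)^k) = 10^k * a + X.
Proof.
  intros. rewrite Rmult_plus_distr_l.
  replace (10^k * (X * (/10)^k)) with (X * ((/10)^k * 10^k)) by ring.
  rewrite inv10pow. ring.
Qed.

Lemma Hs_lim : forall L y, (1 <= L <= y)%nat ->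
  is_lim_seq (fun k => Hs (y * 10^k - L) (10^k)) (ln (INR (y + 1)) - ln (INR y)).
Proof.
  intros L y Hy.
  assert (Hyk : forall k, (y <= y * 10^k)%nat).
  { intros. pose proof (pow_pos10 k). nia. }
  assert (Hyk1 : forall k, (1 <= k)%nat -> (10 * y <= y * 10^k)%nat).
  { intros. replace k with (S (k-1)) by lia. rewrite Nat.pow_succ_r'. pose proof (pow_pos10 (k-1)). nia. }
  assert (Ey : 0 < INR y) by (apply (lt_INR 0); lia).
  assert (EL : 1 <= INR L) by (apply (le_INR 1); lia).
  assert (ELy : INR L <= INR y) by (apply le_INR; lia).
  apply is_lim_seq_le_le_loc with
    (u := fun k => ln ((INR (y+1) + (1 - INR L) * (/10)^k) / (INR y + (1 - INR L) * (/10)^k)))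
    (w := fun k => ln ((INR (y+1) + (- INR L) * (/10)^k) / (INR y + (- INR L) * (/10)^k))).
  - exists 1%nat. intros k Hk.
    pose proof (Hyk1 k Hk).
    destruct (Hs_bounds (y * 10^k - L) (10^k) ltac:(lia)) as [H1 H2].
    assert (Ek : forall c, INR (y * 10^k - L + 10^k + c) = 10^k * (INR (y+1) + (INR c - INR L) * (/10)^k)).
    { intros. rewrite !plus_INR, minus_INR by lia. rewrite mult_INR, pow10_INR.
      replace (INR 1) with 1 by reflexivity.
      rewrite scale10. ring. }
    assert (Ek2 : forall c, INR (y * 10^k - L + c) = 10^k * (INR y + (INR c - INR L) * (/10)^k)).
    { intros. rewrite !plus_INR, minus_INR by lia. rewrite mult_INR, pow10_INR.
      rewrite scale10. ring. }
    assert (Pk := pow10_pos k).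
    assert (Q : forall a b, 0 < 10^k * a -> 0 < 10^k * b -> ln (10^k * a) - ln (10^k * b) = ln (a / b)).
    { intros a b Ha Hb. rewrite <- ln_div by auto. f_equal. field. split; [|lra].
      intro; subst; lra. }
    split.
    + rewrite Ek, Ek2 in H1. rewrite Q in H1. 
      * replace (INR 1 - INR L) with (1 - INR L) in H1 by (simpl; lra). auto.
      * rewrite <- Ek. apply (lt_INR 0). lia.
      * rewrite <- Ek2. apply (lt_INR 0). lia.
    + pose proof (Ek 0%nat) as Ek0. pose proof (Ek2 0%nat) as Ek20.
      rewrite Nat.add_0_r in Ek0, Ek20.
      rewrite Ek0, Ek20 in H2. rewrite Q in H2.
      * replace (INR 0 - INR L) with (- INR L) in H2 by (simpl; lra). auto.
      * rewrite <- Ek0. apply (lt_INR 0). lia.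
      * rewrite <- Ek20. apply (lt_INR 0). lia.
  - apply lnratio_lim; auto. apply (lt_INR 0); lia.
  - apply lnratio_lim; auto. apply (lt_INR 0); lia.
Qed.


Lemma rsum_lim : forall lo hi (g : nat -> nat -> R) (h : nat -> R),
  (forall y, (lo <= y < hi)%nat -> is_lim_seq (fun k => g y k) (h y)) ->
  is_lim_seq (fun k => rsum lo hi (fun y => g y k)) (rsum lo hi h).
Proof.
  intros lo hi g h H. induction hi.
  - rewrite rsum_nil by lia. apply is_lim_seq_ext with (fun _ => 0).
    + intros; rewrite rsum_nil by lia; auto.
    + apply is_lim_seq_const.
  - destruct (Nat.le_gt_cases lo hi).
    + rewrite rsum_S by lia. apply is_lim_seq_ext with (fun k => rsum lo hi (fun y => g y k) + g hi k).
      * intros; rewrite rsum_S by lia; auto.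
      * apply is_lim_seq_plus'. apply IHhi; intros; apply H; lia. apply H; lia.
    + rewrite rsum_nil by lia. apply is_lim_seq_ext with (fun _ => 0).
      * intros; rewrite rsum_nil by lia; auto.
      * apply is_lim_seq_const.
Qed.

Lemma contract_lim : forall (w e : nat -> R), is_lim_seq e 0 ->
  (forall K, w (S K) = (w K + e K) / 10) -> is_lim_seq w 0.
Proof.
  intros w e He Hw.
  apply is_lim_seq_spec. apply is_lim_seq_spec in He.
  intros eps. 
  assert (Heps2 : 0 < eps / 2) by (destruct eps; simpl; lra).
  destruct (He (mkposreal _ Heps2)) as [N HN]. simpl in HN.
  assert (Hb : forall j, Rabs (w (N + j)%nat) <= Rabs (w N) * (/10)^j + eps / 2).
  { induction j.
    - rewrite Nat.add_0_r. simpl. lra.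
    - rewrite Nat.add_succ_r, Hw. 
      specialize (HN (N + j)%nat ltac:(lia)). rewrite Rminus_0_r in HN.
      assert (0 <= (/10)^j) by (apply pow_le; lra).
      unfold Rdiv. rewrite Rabs_mult, Rabs_pos_eq with (x := /10) by lra.
      pose proof (Rabs_triang (w (N + j)%nat) (e (N + j)%nat)).
      simpl. nra. }
  pose proof geom10 as G. apply is_lim_seq_spec in G.
  assert (Hc : 0 < eps / 2 / (Rabs (w N) + 1)).
  { apply Rdiv_lt_0_compat; auto. pose proof (Rabs_pos (w N)); lra. }
  destruct (G (mkposreal _ Hc)) as [M HM]. simpl in HM.
  exists (N + M)%nat. intros n Hn.
  rewrite Rminus_0_r.
  replace n with (N + (n - N))%nat by lia.
  specialize (Hb (n - N)%nat). specialize (HM (n - N)%nat ltac:(lia)).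
  rewrite Rminus_0_r, Rabs_pos_eq in HM by (apply pow_le; lra).
  assert (Rabs (w N) * (/ 10) ^ (n - N) <= eps / 2 / (Rabs (w N) + 1) * Rabs (w N)).
  { rewrite Rmult_comm. apply Rmult_le_compat_r. apply Rabs_pos. lra. }
  assert (eps / 2 / (Rabs (w N) + 1) * Rabs (w N) < eps / 2).
  { pose proof (Rabs_pos (w N)).
    replace (eps / 2 / (Rabs (w N) + 1) * Rabs (w N)) with (eps / 2 - eps / 2 / (Rabs (w N) + 1))
      by (field; lra). lra. }
  lra.
Qed.

Lemma cesaro10 : forall (E : nat -> R) (I : R), is_lim_seq E I ->
  is_lim_seq (fun K => rsum 0 K (fun k => 10^k * E k) / 10^K) (I / 9).
Proof.
  intros E I HE.
  set (w := fun K => rsum 0 K (fun k => 10^k * E k) / 10^K - I / 9).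
  assert (Hw : is_lim_seq w 0).
  { apply contract_lim with (e := fun K => E K - I).
    - replace 0 with (I - I) by ring. apply is_lim_seq_minus'; auto. apply is_lim_seq_const.
    - intros K. unfold w. rewrite rsum_S by lia. simpl pow.
      pose proof (pow10_pos K). field. lra. }
  apply is_lim_seq_ext with (fun K => w K + I / 9).
  - intros; unfold w; ring.
  - assert (H := is_lim_seq_plus' _ _ _ _ Hw (is_lim_seq_const (I/9))).
    rewrite Rplus_0_l in H. exact H.
Qed.


Section Main.
Variables (p d : nat).
Hypothesis (hp : (2 <= p)%nat) (hd : (d <= 9)%nat).

Definition fP (m : nat) : R := INR (Ncount d p m) / INR (m + 1 - 10^(p-1)).
Definition bl (y k : nat) : R := rsum (y * 10^k) ((y + 1) * 10^k) fP.
Definition Bn (y k : nat) : R := bl y k / 10^k.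
Definition bval (y : nat) : R :=
  INR (be d y) + (INR (Cy d y) - INR (be d y) * INR y) * (ln (INR (y + 1)) - ln (INR y)).

Lemma yk_ge : forall y k, (10^(p-1) <= y)%nat -> (10^(p-1) <= y * 10^k)%nat.
Proof. intros. pose proof (pow_pos10 k). nia. Qed.

Lemma fP_point : forall k y r, (10^(p-1) <= y < 10 * 10^(p-1))%nat -> (r < 10^k)%nat ->
  fP (y * 10^k + r) = INR (be d y) +
    (10^k * INR (Cy d y) - INR (10^(p-2)) - INR (be d y) * INR (y * 10^k - 10^(p-1)))
    * / INR (y * 10^k - 10^(p-1) + r + 1).
Proof.
  intros k y r Hy Hr. unfold fP.
  pose proof (Ncount_block p d hp hd k y r Hy Hr) as H.
  pose proof (yk_ge y k ltac:(lia)).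
  assert (HN : INR (Ncount d p (y * 10 ^ k + r)) =
     10^k * INR (Cy d y) + INR (be d y) * (INR r + 1) - INR (10^(p-2))).
  { apply (f_equal INR) in H. rewrite !plus_INR, !mult_INR, !plus_INR, !pow10_INR in H.
    rewrite !pow10_INR. change (INR 1) with 1 in H. lra. }
  rewrite HN.
  replace (y * 10 ^ k + r + 1 - 10 ^ (p - 1))%nat with (y * 10^k - 10^(p-1) + r + 1)%nat by lia.
  assert (0 < INR (y * 10^k - 10^(p-1) + r + 1)) by (apply (lt_INR 0); lia).
  rewrite !plus_INR in *. change (INR 1) with 1 in *. field. lra.
Qed.

Lemma bl_formula : forall y k, (10^(p-1) <= y < 10 * 10^(p-1))%nat ->
  bl y k = 10^k * INR (be d y) +
    (10^k * INR (Cy d y) - INR (10^(p-2)) - INR (be d y) * INR (y * 10^k - 10^(p-1)))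
    * Hs (y * 10^k - 10^(p-1)) (10^k).
Proof.
  intros y k Hy. unfold bl, Hs.
  replace ((y + 1) * 10^k)%nat with (y * 10^k + 10^k)%nat by lia.
  rewrite rsum_shift.
  rewrite (rsum_ext _ _ _ (fun r => INR (be d y) + (10^k * INR (Cy d y) - INR (10^(p-2)) - INR (be d y) * INR (y * 10^k - 10^(p-1)))
    * / INR (y * 10^k - 10^(p-1) + r + 1))).
  - rewrite rsum_plus, rsum_const, rsum_scal. rewrite Nat.sub_0_r, pow10_INR. ring.
  - intros. apply fP_point; lia.
Qed.

Lemma Bn_formula : forall y k, (10^(p-1) <= y < 10 * 10^(p-1))%nat ->
  Bn y k = INR (be d y) +
    (INR (Cy d y) - INR (10^(p-2)) * (/10)^k - INR (be d y) * (INR y - INR (10^(p-1)) * (/10)^k))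
    * Hs (y * 10^k - 10^(p-1)) (10^k).
Proof.
  intros y k Hy. unfold Bn. rewrite bl_formula by auto.
  rewrite minus_INR by (apply yk_ge; lia). rewrite mult_INR, !pow10_INR, pow_inv.
  pose proof (pow10_pos k). set (HH := Hs _ _). field. lra.
Qed.

Lemma Bn_lim : forall y, (10^(p-1) <= y < 10 * 10^(p-1))%nat ->
  is_lim_seq (fun k => Bn y k) (bval y).
Proof.
  intros y Hy.
  apply is_lim_seq_ext with (fun k => INR (be d y) +
    (INR (Cy d y) - INR (10^(p-2)) * (/10)^k - INR (be d y) * (INR y - INR (10^(p-1)) * (/10)^k))
    * Hs (y * 10^k - 10^(p-1)) (10^k)).
  { intros; rewrite Bn_formula; auto. }
  unfold bval.
  replace (INR (Cy d y) - INR (be d y) * INR y) with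
    (INR (Cy d y) - INR (10^(p-2)) * 0 - INR (be d y) * (INR y - INR (10^(p-1)) * 0)) by ring.
  apply is_lim_seq_plus'. apply is_lim_seq_const.
  apply is_lim_seq_mult'.
  - apply is_lim_seq_minus'. apply is_lim_seq_minus'. apply is_lim_seq_const.
    apply is_lim_seq_mult'. apply is_lim_seq_const. apply geom10.
    apply is_lim_seq_mult'. apply is_lim_seq_const.
    apply is_lim_seq_minus'. apply is_lim_seq_const.
    apply is_lim_seq_mult'. apply is_lim_seq_const. apply geom10.
  - apply Hs_lim. pose proof (pow_pos10 (p-1)). lia.
Qed.

Definition Jc (c : nat) : R := rsum (10^(p-1)) c bval.

Lemma Pdig_decomp : forall c K, (10^(p-1) <= c <= 10 * 10^(p-1))%nat ->
  Pdig d (c * 10^K - 1) p =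
  / INR (c * 10^K - 10^(p-1)) *
  (rsum 0 K (fun k => 10^k * rsum (10^(p-1)) (10 * 10^(p-1)) (fun y => Bn y k))
   + 10^K * rsum (10^(p-1)) c (fun y => Bn y K)).
Proof.
  intros c K Hc. unfold Pdig.
  pose proof (pow_pos10 K). pose proof (pow_pos10 (p-1)).
  assert (HcK : (10^(p-1) * 10^K <= c * 10^K)%nat) by nia.
  assert (HLK : (10^(p-1) <= 10^(p-1) * 10^K)%nat) by nia.
  replace (c * 10 ^ K - 1 + 1 - 10 ^ (p - 1))%nat with (c * 10^K - 10^(p-1))%nat by lia.
  replace (c * 10 ^ K - 1 + 1)%nat with (c * 10^K)%nat by lia.
  f_equal.
  rewrite (rsum_split _ (10^(p-1) * 10^K)) by lia.
  rewrite rsum_decades. f_equal.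
  - apply rsum_ext. intros k _.
    rewrite Nat.pow_succ_r'.
    replace (10 ^ (p - 1) * (10 * 10 ^ k))%nat with ((10 * 10^(p-1)) * 10^k)%nat by lia.
    rewrite rsum_blocks by lia. rewrite <- rsum_scal. apply rsum_ext.
    intros y _. unfold Bn, bl, fP. field. apply pow_nonzero. lra.
  - rewrite rsum_blocks by lia. rewrite <- rsum_scal. apply rsum_ext.
    intros y _. unfold Bn, bl, fP. field. apply pow_nonzero. lra.
Qed.

Lemma main_lim : forall c, (10^(p-1) <= c <= 10 * 10^(p-1))%nat ->
  is_lim_seq (fun K => Pdig d (c * 10^K - 1) p)
    ((Jc (10 * 10^(p-1)) / 9 + Jc c) / INR c).
Proof.
  intros c Hc.
  pose proof (pow_pos10 (p-1)).
  apply is_lim_seq_ext_loc with (fun K =>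
    (rsum 0 K (fun k => 10^k * rsum (10^(p-1)) (10 * 10^(p-1)) (fun y => Bn y k)) / 10^K
     + rsum (10^(p-1)) c (fun y => Bn y K)) / (INR c - INR (10^(p-1)) * (/10)^K)).
  { exists 1%nat. intros K HK. rewrite Pdig_decomp by auto.
    pose proof (pow_pos10 K).
    assert (10^(p-1) * 10 <= c * 10^K)%nat.
    { replace K with (S (K - 1)) by lia. rewrite Nat.pow_succ_r'. pose proof (pow_pos10 (K-1)). nia. }
    assert (INR (10^(p-1)) < INR c * 10^K).
    { rewrite <- pow10_INR, <- mult_INR. apply lt_INR. lia. }
    rewrite minus_INR by lia. rewrite mult_INR, !pow10_INR, pow_inv in *.
    pose proof (pow10_pos K).
    set (S1 := rsum 0 K _). set (S2 := rsum _ c _).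
    field. split; lra. }
  apply is_lim_seq_div'.
  - apply is_lim_seq_plus'.
    + apply cesaro10. apply rsum_lim. intros; apply Bn_lim; lia.
    + apply rsum_lim. intros; apply Bn_lim; lia.
  - pose proof (is_lim_seq_minus' _ _ _ _ (is_lim_seq_const (INR c))
      (is_lim_seq_mult' _ _ _ _ (is_lim_seq_const (INR (10^(p-1)))) geom10)) as Hden.
    rewrite Rmult_0_r, Rminus_0_r in Hden. exact Hden.
  - apply not_0_INR. lia.
Qed.

End Main.



Lemma rsum_tele : forall lo hi, (lo <= hi)%nat ->
  rsum lo hi (fun y => ln (INR (y + 1)) - ln (INR y)) = ln (INR hi) - ln (INR lo).
Proof.
  intros lo hi H. induction hi.
  - replace lo with 0%nat by lia. rewrite rsum_nil by lia. ring.
  - destruct (Nat.eq_dec lo (S hi)).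
    + subst. rewrite rsum_nil by lia. ring.
    + rewrite rsum_S by lia. rewrite IHhi by lia. replace (hi + 1)%nat with (S hi) by lia. ring.
Qed.

Lemma ln_divN : forall x y, (0 < x)%nat -> (0 < y)%nat ->
  ln (INR x / INR y) = ln (INR x) - ln (INR y).
Proof. intros. apply ln_div; apply (lt_INR 0); auto. Qed.

Section Ident.
Variables (p d : nat).
Hypothesis (hp : (2 <= p)%nat) (hd : (d <= 9)%nat).

Lemma be1 : forall j, be d (10 * j + d) = 1%nat.
Proof. intros. unfold be. replace ((10 * j + d) mod 10)%nat with d by dlia. rewrite Nat.eqb_refl. auto. Qed.

Lemma be0 : forall j y, (10 * j + d < y < 10 * j + d + 10)%nat -> be d y = 0%nat.
Proof. intros. unfold be. destruct (Nat.eqb_spec (y mod 10) d); auto. exfalso. dlia. Qed.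

Lemma bval_flat : forall j y, (10 * j + d < y < 10 * j + d + 10)%nat ->
  bval d y = INR (j + 1) * (ln (INR (y + 1)) - ln (INR y)).
Proof.
  intros. unfold bval. rewrite (be0 j) by auto. rewrite (Cy_val d y (j+1)) by lia.
  simpl INR at 1. simpl INR at 2. ring.
Qed.

Lemma bval_peak : forall j, bval d (10 * j + d) =
  1 + (INR j - INR (10 * j + d)) * (ln (INR (10 * j + d + 1)) - ln (INR (10 * j + d))).
Proof.
  intros. unfold bval. rewrite be1. rewrite (Cy_val d _ j) by lia. simpl INR at 1. simpl INR at 2. ring.
Qed.

Definition Phi (i : nat) : R :=
  INR i + 1 - 10 ^ (p - 2) - INR d * kdpi d p i - 9 * ldpi d p i + mdpi d p i + ndpi d p i
   + 10 ^ (p - 2) * ln (INR (10 ^ (p - 1) + d) / INR (10 ^ (p - 1))).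

Lemma Jc_Phi : forall t, (10^(p-2) + t <= 10^(p-1) - 1)%nat ->
  Jc p d (10 * (10^(p-2) + t) + d + 1) = Phi (10^(p-2) + t).
Proof.
  pose proof (L_eq p hp) as HL. pose proof (pow_pos10 (p-2)) as Ha.
  assert (Ra : INR (10^(p-2)) = 10^(p-2)) by apply pow10_INR.
  assert (RL : INR (10^(p-1)) = 10 * 10^(p-2)) by (rewrite HL, mult_INR, Ra; simpl; ring).
  induction t; intros Ht.
  - rewrite Nat.add_0_r. unfold Jc, Phi.
    replace (10 * 10 ^ (p - 2) + d + 1)%nat with (S (10^(p-1) + d))%nat by lia.
    rewrite rsum_S by lia.
    rewrite (rsum_ext _ _ _ (fun y => INR (10^(p-2)) * (ln (INR (y + 1)) - ln (INR y)))).
    2: { intros y Hy. rewrite (bval_flat (10^(p-2) - 1)) by lia.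
         replace (10 ^ (p - 2) - 1 + 1)%nat with (10^(p-2))%nat by lia. auto. }
    rewrite rsum_scal, rsum_tele by lia.
    replace (10 ^ (p - 1) + d)%nat with (10 * 10^(p-2) + d)%nat by lia.
    rewrite bval_peak.
    unfold kdpi, ldpi, mdpi, ndpi.
    rewrite !(rsum_nil (10^(p-2)) (10^(p-2))) by lia.
    replace (10^(p-2)+1)%nat with (S (10^(p-2)))%nat by lia.
    rewrite !rsum_S, !rsum_nil by lia.
    rewrite HL. rewrite !ln_divN by lia.
    set (l1 := ln (INR (10 * 10 ^ (p - 2) + d + 1))).
    set (l2 := ln (INR (10 * 10 ^ (p - 2) + d))).
    set (l3 := ln (INR (10 * 10 ^ (p - 2)))).
    rewrite !plus_INR, !mult_INR, Ra. simpl (INR 10). ring.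
  - replace (10 ^ (p - 2) + S t)%nat with (S (10^(p-2) + t))%nat by lia.
    set (i := (10 ^ (p - 2) + t)%nat) in *.
    specialize (IHt ltac:(lia)).
    unfold Jc in *.
    replace (10 * S i + d + 1)%nat with (S (10 * i + d + 1 + 9))%nat by lia.
    rewrite rsum_S by lia. rewrite (rsum_split _ (10 * i + d + 1)) by lia.
    rewrite IHt.
    rewrite (rsum_ext _ (10 * i + d + 1 + 9) _ (fun y => INR (i + 1) * (ln (INR (y + 1)) - ln (INR y)))).
    2: { intros y Hy. apply bval_flat. lia. }
    rewrite rsum_scal, rsum_tele by lia.
    replace (10 * i + d + 1 + 9)%nat with (10 * (S i) + d)%nat by lia.
    rewrite bval_peak.
    unfold Phi, kdpi, ldpi, mdpi, ndpi.
    replace (S i + 1)%nat with (S (i + 1))%nat by lia.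
    rewrite !(rsum_S _ (i + 1)) by lia.
    rewrite !(rsum_S _ i) by lia.
    replace (i + 1)%nat with (S i) by lia.
    rewrite !ln_divN by lia.
    replace (10 * S i + d + 1)%nat with (10 * (S i) + d + 1)%nat by lia.
    replace (10 * (i + 1) + d)%nat with (10 * S i + d)%nat by lia.
    set (l1 := ln (INR (10 * S i + d + 1))).
    set (l2 := ln (INR (10 * S i + d))).
    set (l3 := ln (INR (10 * i + d + 1))).
    rewrite !plus_INR, !mult_INR, (S_INR i).
    replace (INR 10) with 10 by (simpl; lra). ring.
Qed.

End Ident.


Section Fin.
Variables (p d : nat).
Hypothesis (hp : (2 <= p)%nat) (hd : (d <= 9)%nat).

Lemma Jc_tail : Jc p d (10 * 10^(p-1)) = Phi p d (10^(p-1) - 1) +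
  INR (10^(p-1)) * (ln (INR (10 * 10^(p-1))) - ln (INR (10 * 10^(p-1) - 9 + d))).
Proof.
  pose proof (L_eq p hp) as HL. pose proof (pow_pos10 (p-2)) as Ha.
  pose proof (Jc_Phi p d hp hd (10^(p-1) - 1 - 10^(p-2)) ltac:(lia)) as H.
  replace (10 ^ (p - 2) + (10 ^ (p - 1) - 1 - 10 ^ (p - 2)))%nat with (10^(p-1) - 1)%nat in H by lia.
  replace (10 * (10 ^ (p - 1) - 1) + d + 1)%nat with (10 * 10^(p-1) - 9 + d)%nat in H by lia.
  rewrite <- H. unfold Jc.
  rewrite (rsum_split _ (10 * 10^(p-1) - 9 + d)) by lia. f_equal.
  rewrite (rsum_ext _ _ _ (fun y => INR (10^(p-1) - 1 + 1) * (ln (INR (y + 1)) - ln (INR y)))).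
  - rewrite rsum_scal, rsum_tele by lia. f_equal. f_equal. lia.
  - intros. apply (bval_flat p d hp hd); lia.
Qed.

Lemma alpha_id : alpha_formula d p = (Jc p d (10 * 10^(p-1)) / 9 + Jc p d (10^(p-1))) / INR (10^(p-1)).
Proof.
  pose proof (L_eq p hp) as HL. pose proof (pow_pos10 (p-2)) as Ha.
  unfold Jc at 2. rewrite rsum_nil by lia.
  rewrite Jc_tail. unfold alpha_formula, Phi, kdp, ldp, mdp, ndp.
  rewrite (Lp_eq p) by lia.
  replace (10 * 10 ^ (p - 1) - 10 + d + 1)%nat with (10 * 10^(p-1) - 9 + d)%nat by lia.
  rewrite (ln_divN (10 * 10^(p-1))) by lia.
  rewrite minus_INR by lia.
  set (A := ln (INR (10 ^ (p - 1) + d) / INR (10 ^ (p - 1)))).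
  set (B := ln (INR (10 * 10 ^ (p - 1)))).
  set (C := ln (INR (10 * 10 ^ (p - 1) - 9 + d))).
  rewrite !pow10_INR.
  assert (E : 10 ^ (p - 1) = 10 * 10 ^ (p - 2)).
  { replace (p - 1)%nat with (S (p - 2)) by lia. simpl. ring. }
  rewrite E. pose proof (pow10_pos (p-2)). change (INR 1) with 1. field. lra.
Qed.

Lemma prop5_id : forall i, (10^(p-2) <= i <= 10^(p-1) - 1)%nat ->
  prop5_limit d p i = (Jc p d (10 * 10^(p-1)) / 9 + Jc p d (10 * i + d + 1)) / INR (10 * i + d + 1).
Proof.
  intros i Hi.
  pose proof (Jc_Phi p d hp hd (i - 10^(p-2)) ltac:(lia)) as H.
  replace (10 ^ (p - 2) + (i - 10 ^ (p - 2)))%nat with i in H by lia.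
  rewrite H.
  assert (Ha : alpha_formula d p * 10 ^ (p - 1) = Jc p d (10 * 10^(p-1)) / 9).
  { rewrite alpha_id. unfold Jc at 2. rewrite rsum_nil by lia. rewrite pow10_INR.
    field. apply pow_nonzero. lra. }
  unfold prop5_limit, Phi. rewrite Ha. f_equal. ring.
Qed.

End Fin.

Theorem proposition5 (p d i : nat)
  (hp : (2 <= p)%nat) (hd : (d <= 9)%nat)
  (hi1 : (10 ^ (p - 2) <= i)%nat) (hi2 : (i <= 10 ^ (p - 1) - 1)%nat) :
  is_lim_seq (fun n => Pdig d (10 ^ n - 1) p) (alpha_formula d p) /\
  is_lim_seq (fun n => Pdig d ((10 * i + d + 1) * 10 ^ (n - p + 1) - 1) p)
             (prop5_limit d p i).
Proof.
  pose proof (L_eq p hp) as HL. pose proof (pow_pos10 (p-2)) as Ha.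
  split.
  - apply (proj2 (is_lim_seq_incr_n _ (p - 1) _)).
    apply is_lim_seq_ext with (fun n => Pdig d (10^(p-1) * 10^n - 1) p).
    { intros n. f_equal. rewrite Nat.pow_add_r, Nat.mul_comm. reflexivity. }
    rewrite alpha_id by auto. apply main_lim; lia.
  - apply (proj2 (is_lim_seq_incr_n _ p _)).
    apply is_lim_seq_ext with (fun n => Pdig d ((10 * i + d + 1) * 10^(S n) - 1) p).
    { intros n. replace (n + p - p + 1)%nat with (S n) by lia. reflexivity. }
    apply (proj1 (is_lim_seq_incr_1 (fun n => Pdig d ((10 * i + d + 1) * 10^n - 1) p) _)).
    rewrite prop5_id by (auto; lia). apply main_lim; lia.
Qed.
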